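(* Consider an unweighted ESP instance on $G=(V,E)$, $|V|=n$, root $r$. For each $k\in\{1,\dots,n\}$ let $T_k$ be the tree returned by Garg's 2-approximation algorithm for the rooted $k$-MST problem (a subtree of $G$ containing $r$ with exactly $k$ vertices whose length $\ell(T_k)=\sum_{e\in E(T_k)}\ell_e$ is at most twice the minimum length of such a tree), where $T_1=(\{r\},\emptyset)$. Let $H$ be the directed graph with vertex set $\{1,\dots,n\}$, arcs $(i,j)$ for all $i<j$, and arc costs $c_{i,j}=(n-i)\,\ell(T_j)$. Let $P=(n_0,n_1,\dots,n_l)$ with $n_0=1$, $n_l=n$ be a shortest $(1,n)$-path in $H$, and let $\sigma_{\mathrm{Alg}}$ be the expanding search pattern built in $l$ phases, where in phase $j\in\{1,\dots,l\}$ the edges of $T_{n_j}$ having fewer than two endpoints in $\bigcup_{i=0}^{j-1}V(T_{n_i})$ are appended in an order such that the set of explored vertices stays connected (edges both of whose endpoints are already explored being skipped). Then $L(\sigma_{\mathrm{Alg}})\le z$, where $z$ is the cost of a shortest $(1,n)$-path in $H$.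
   Context: Unweighted ESP: connected undirected graph $G=(V,E)$, root $r\in V$, edge lengths $\ell_e\in\mathbb{Z}_{>0}$, all vertex weights $w_v=1$. An expanding search pattern is a sequence of edges $\sigma=(e_1,\dots,e_m)$ with $r\in e_1$ such that $\{e_1,\dots,e_i\}$ forms a tree in $G$ for every $i$. For $v\ne r$ visited by $\sigma$, $k_v=\min\{i:v\in e_i\}$, $k_r=0$, latency $L_v(\sigma)=\sum_{i=1}^{k_v}\ell_{e_i}$; total latency $L(\sigma)=\sum_{v\in V}L_v(\sigma)$. The cost of a path in $H$ is the sum of its arc costs. *)

(* Defs.v *)
From mathcomp Require Import all_boot.
Set Implicit Arguments. Unset Strict Implicit. Unset Printing Implicit Defensive.

(* Graph G = (V, E): V a finType (all of V is the vertex set), E a set of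
   2-element vertex sets (simple undirected graph). Lengths ell : {set V} -> nat. *)
Section ESP.
Variable V : finType.

Definition simple_graph (E : {set {set V}}) : Prop :=
  forall e, e \in E -> #|e| = 2.

Definition adj (F : {set {set V}}) : rel V := fun x y => [set x; y] \in F.

Definition connected_graph (E : {set {set V}}) : Prop :=
  forall x y : V, connect (adj E) x y.

Definition connected_on (S : {set V}) (F : {set {set V}}) : Prop :=
  forall x y, x \in S -> y \in S -> connect (adj F) x y.

Definition acyclic (F : {set {set V}}) : Prop :=
  forall c : seq V, uniq c -> 2 < size c -> ~~ cycle (adj F) c.

Definition is_tree (S : {set V}) (F : {set {set V}}) : Prop :=
  [/\ (forall e, e \in F -> e \subset S), S != set0, connected_on S F & acyclic F].

Definition rooted_ksubtree (E : {set {set V}}) (r : V) (k : nat)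
  (S : {set V}) (F : {set {set V}}) : Prop :=
  [/\ F \subset E, r \in S, #|S| = k & is_tree S F].

Definition tlen (ell : {set V} -> nat) (F : {set {set V}}) : nat :=
  \sum_(e in F) ell e.

Definition verts (s : seq {set V}) : {set V} := \bigcup_(e <- s) e.

Definition is_ESP (E : {set {set V}}) (r : V) (sigma : seq {set V}) : Prop :=
  [/\ all (fun e => e \in E) sigma,
      (sigma = [::] \/ r \in head set0 sigma) &
      (forall i, 1 <= i <= size sigma ->
         is_tree (verts (take i sigma)) [set e in take i sigma])].

Definition latency (ell : {set V} -> nat) (r : V) (sigma : seq {set V}) (v : V) : nat :=
  if v == r then 0
  else \sum_(e <- take (find (fun e : {set V} => v \in e) sigma).+1 sigma) ell e.

Definition total_latency (ell : {set V} -> nat) (r : V) (sigma : seq {set V}) : nat :=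
  \sum_(v : V) latency ell r sigma v.

Fixpoint proc (X : {set V}) (s : seq {set V}) : seq {set V} :=
  match s with
  | [::] => [::]
  | e :: s' => if e \subset X then proc X s' else e :: proc (X :|: e) s'
  end.

Fixpoint build (X : {set V}) (ss : seq (seq {set V})) : seq {set V} :=
  match ss with
  | [::] => [::]
  | s :: rest => let b := proc X s in b ++ build (X :|: verts b) rest
  end.

(* candidate edges of phase j+1 (0-based j): edges of T_{n_{j+1}} with fewer than
   two endpoints in V(T_{n_0}) u ... u V(T_{n_j}), where (n_0, n_1, ...) = 1 :: p *)
Definition cand (S : nat -> {set V}) (F : nat -> {set {set V}}) (p : seq nat) (j : nat)
  : {set {set V}} :=
  [set e in F (nth 0 p j) | ~~ (e \subset \bigcup_(i <- take j.+1 (1 :: p)) S i)].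

End ESP.

(* The auxiliary digraph H on {1..n}: a (1,n)-path is 1 :: p with p strictly
   increasing from 1 and ending at n; cost of arc (i,j) is (n - i) * c j. *)
Definition H_path (n : nat) (p : seq nat) : Prop := path ltn 1 p /\ last 1 p = n.

Definition H_cost (n : nat) (c : nat -> nat) (p : seq nat) : nat :=
  \sum_(ij <- zip (1 :: p) p) (n - ij.1) * c ij.2.

(* Main.v *)
Require Import Defs.
From mathcomp Require Import all_boot zify.
Set Implicit Arguments. Unset Strict Implicit.

Section H.
Variable V : finType.
Variable ell : {set V} -> nat.
Implicit Types (X : {set V}) (s b : seq {set V}) (ss : seq (seq {set V})).

Definition len s := \sum_(e <- s) ell e.

Lemma verts_cons e s : verts (e :: s) = e :|: verts s.
Proof. by rewrite /verts big_cons. Qed.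

Lemma mem_verts v s : (v \in verts s) = has (fun e : {set V} => v \in e) s.
Proof.
elim: s => [|e s IH]; first by rewrite /verts big_nil in_set0.
by rewrite verts_cons in_setU IH.
Qed.

Lemma len_proc X s : len (proc X s) <= len s.
Proof.
elim: s X => [|e s IH] X //=; rewrite /len big_cons; case: ifP => _.
  by apply: leq_trans (IH X) _; rewrite leq_addl.
by rewrite big_cons leq_add2l IH.
Qed.

Lemma cover_proc X s e : e \in s -> e \subset X :|: verts (proc X s).
Proof.
elim: s X => [|e' s IH] X //=; rewrite inE; case/orP=> [/eqP->|He].
  case: ifP => H; first by apply: subset_trans H (subsetUl _ _).
  by rewrite verts_cons setUA; apply: subset_trans (subsetUr X e') (subsetUl _ _).
case: ifP => _; first exact: IH.
by rewrite verts_cons setUA; apply: IH.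
Qed.

Lemma len_take n s : len (take n s) <= len s.
Proof.
by rewrite /len -{2}(cat_take_drop n s) big_cat leq_addr.
Qed.

Definition lat s v := \sum_(e <- take (find (fun e : {set V} => v \in e) s).+1 s) ell e.

Fixpoint B X ss v := match ss with
  | [::] => 0
  | s :: rest => (v \notin X) * len (proc X s) + B (X :|: verts (proc X s)) rest v
  end.

Lemma lat_build ss X v : v \notin X -> lat (build X ss) v <= B X ss v.
Proof.
elim: ss X => [|s rest IH] X Hv; first by rewrite /lat /= big_nil.
rewrite /lat /= find_cat; set b := proc X s.
case: ifP => Hh.
  rewrite takel_cat; last by rewrite -has_find.
  by rewrite Hv mul1n; apply: leq_trans (len_take _ _) (leq_addr _ _).
rewrite take_cat; set f := find _ _.
have -> : ((size b + f).+1 < size b) = false by lia.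
rewrite -addnS addKn.
rewrite big_cat /= Hv mul1n leq_add2l; apply: IH.
by rewrite in_setU negb_or Hv mem_verts Hh.
Qed.

Fixpoint Xg X ss j := match j with
  | 0 => X
  | j'.+1 => let Y := Xg X ss j' in Y :|: verts (proc Y (nth [::] ss j'))
  end.

Lemma Xg_shift X s rest j :
  Xg X (s :: rest) j.+1 = Xg (X :|: verts (proc X s)) rest j.
Proof.
have XgS Y tt k : Xg Y tt k.+1 = Xg Y tt k :|: verts (proc (Xg Y tt k) (nth [::] tt k)) by [].
elim: j => [|j IH] //. by rewrite XgS IH XgS.
Qed.

Lemma sum_notin X : \sum_(v : V) (v \notin X : nat) = #|~: X|.
Proof.
rewrite -sum1_card [RHS]big_mkcond /=; apply: eq_bigr => v _.
by rewrite in_setC; case: (v \notin X).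
Qed.

Lemma sumB ss X : \sum_(v : V) B X ss v =
  \sum_(j < size ss) #|~: Xg X ss j| * len (proc (Xg X ss j) (nth [::] ss j)).
Proof.
elim: ss X => [|s rest IH] X /=; first by rewrite big_ord0 big1.
rewrite big_split /= big_ord_recl IH.
rewrite -big_distrl /= sum_notin; congr (_ + _).
apply: eq_bigr => j _.
by rewrite add0n -(Xg_shift X s rest j).
Qed.

Lemma Xg_mono X ss j : X \subset Xg X ss j.
Proof. elim: j => [|j IH] //=; exact: subset_trans IH (subsetUl _ _). Qed.

End H.

Lemma mem_bigcup_seq (V : finType) (T : Type) (G : T -> {set V}) (s : seq T) v :
  (v \in \bigcup_(i <- s) G i) = has (fun i => v \in G i) s.
Proof.
elim: s => [|e s IH]; first by rewrite big_nil in_set0.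
by rewrite big_cons in_setU IH.
Qed.

Lemma path_last_ge (a : nat) (p : seq nat) : path ltn a p -> forall x, x \in a :: p -> x <= last a p.
Proof.
elim: p a => [|y p IH] a /=; first by move=> _ x; rewrite inE => /eqP->.
case/andP=> Hay Hp x; rewrite inE; case/orP=> [/eqP->|Hx]; last exact: IH.
by apply: leq_trans (ltnW Hay) (IH _ Hp _ (mem_head _ _)).
Qed.
Lemma XgS (V : finType) (Y : {set V}) (tt : seq (seq {set V})) (k : nat) :
  Xg Y tt k.+1 = Xg Y tt k :|: verts (proc (Xg Y tt k) (nth [::] tt k)).
Proof. by []. Qed.

Theorem lemma2 (V : finType) (E : {set {set V}}) (ell : {set V} -> nat) (r : V)
  (TS : nat -> {set V}) (F : nat -> {set {set V}})
  (p : seq nat) (ss : seq (seq {set V})) (sigma : seq {set V}) :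
  simple_graph E ->
  (forall e, e \in E -> 0 < ell e) ->
  connected_graph E ->
  (* T_k = (S k, F k): rooted k-subtrees, 2-approximate (Garg's output) *)
  (forall k, 1 <= k <= #|V| -> rooted_ksubtree E r k (TS k) (F k)) ->
  (forall k, 1 <= k <= #|V| -> forall S' F', rooted_ksubtree E r k S' F' ->
     tlen ell (F k) <= 2 * tlen ell F') ->
  TS 1 = [set r] -> F 1 = set0 ->
  (* 1 :: p is a shortest (1,n)-path in H *)
  H_path #|V| p ->
  (forall q, H_path #|V| q ->
     H_cost #|V| (fun k => tlen ell (F k)) p <= H_cost #|V| (fun k => tlen ell (F k)) q) ->
  (* sigma is built in phases from orderings ss of the candidate edge sets *)
  size ss = size p ->
  (forall j, j < size p -> perm_eq (nth [::] ss j) (enum (cand TS F p j))) ->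
  sigma = build [set r] ss ->
  is_ESP E r sigma ->
  total_latency ell r sigma <= H_cost #|V| (fun k => tlen ell (F k)) p.
Proof.
move=> _ _ _ Htree _ HT1 _ [Hpath Hlast] _ Hsize Hperm -> _.
have H1 : total_latency ell r (build [set r] ss) <= \sum_v B ell [set r] ss v.
  apply: leq_sum => v _; rewrite /latency; case: eqP => // /eqP Hvr.
  by apply: (lat_build ell); rewrite in_set1.
apply: (leq_trans H1); rewrite sumB.
have Hrange : forall x, x \in 1 :: p -> 1 <= x <= #|V|.
  move=> x Hx; apply/andP; split; last by rewrite -Hlast; exact: path_last_ge Hpath _ Hx.
  move: Hx; rewrite inE => /orP [/eqP->//|Hx].
  by have := order_path_min ltn_trans Hpath => /allP/(_ _ Hx); apply: ltnW.
set Xf := Xg [set r] ss.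
have Hinv : forall j, j <= size p -> \bigcup_(i <- take j.+1 (1::p)) TS i \subset Xf j.
  elim=> [|j IH] Hj.
    by rewrite /= take0 big_seq1 HT1.
  apply/subsetP => v; rewrite mem_bigcup_seq /= (take_nth 0 Hj) has_rcons orbCA.
  case/orP => [Hv|Hv]; last first.
    rewrite /Xf XgS -/Xf in_setU; apply/orP; left; apply: (subsetP (IH (ltnW Hj))).
    by rewrite mem_bigcup_seq.
  have Hkp : nth 0 p j \in 1 :: p by rewrite inE mem_nth ?orbT.
  have [_ Hr _ [_ _ Hconn _]] := Htree _ (Hrange _ Hkp).
  case: (v =P r) => [->|Hvr].
    by apply: (subsetP (Xg_mono [set r] ss j.+1)); rewrite in_set1.
  have := Hconn v r Hv Hr => /connectP [q Hq Hl].
  case: q Hq Hl => [|y q] /=; first by move=> _ Hl; exfalso; apply: Hvr.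
  case/andP => Hvy _ _.
  case: (boolP ([set v; y] \subset \bigcup_(i <- take j.+1 (1::p)) TS i)) => Hsub.
    rewrite /Xf XgS -/Xf in_setU; apply/orP; left; apply: (subsetP (IH (ltnW Hj))).
    by apply: (subsetP Hsub); rewrite set21.
  have He : [set v; y] \in cand TS F p j by rewrite inE Hsub andbT.
  have He' : [set v; y] \in nth [::] ss j by rewrite (perm_mem (Hperm j Hj)) mem_enum.
  have := cover_proc (Xf j) He' => /subsetP /(_ v (set21 v y)).
  by rewrite /Xf XgS -/Xf.
rewrite /H_cost (big_nth (0,0)) size_zip /=.
have -> : minn (size p).+1 (size p) = size p by lia.
rewrite big_mkord Hsize; apply: leq_sum => j _.
rewrite nth_zip_cond size_zip /=.
have Hjo := ltn_ord j.
have -> : j < minn (size p).+1 (size p) by lia.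
rewrite /=; apply: leq_mul.
  set k := nth 0 (1 :: p) j.
  have Hk : k \in 1 :: p by rewrite mem_nth //= ltnS ltnW.
  have [_ _ Hcard _] := Htree _ (Hrange _ Hk).
  have Hsub : TS k \subset Xf j.
    apply: subset_trans (Hinv j (ltnW (ltn_ord j))).
    apply/subsetP => v Hv; rewrite mem_bigcup_seq; apply/hasP; exists k => //.
    rewrite /k -(nth_take 0 (ltnSn j)); apply: mem_nth.
    rewrite size_take /=; case: ifP => _; lia.
  have -> : #|~: Xf j| = #|V| - #|Xf j| by rewrite [LHS]cardsCs setCK.
  apply: (@leq_trans (#|V| - #|TS k|)); last by rewrite Hcard.
  apply: leq_sub2l; exact: subset_leq_card.
apply: leq_trans (len_proc _ _ _) _.
rewrite /len (perm_big _ (Hperm j (ltn_ord j))) big_enum /= /tlen.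
rewrite [X in _ <= X](@big_setID _ _ _ _ (F (nth 0 p j)) (cand TS F p j)) /=.
have -> : F (nth 0 p j) :&: cand TS F p j = cand TS F p j.
  by apply/setIidPr/subsetP => e; rewrite inE => /andP[].
by rewrite leq_addr.
Qed.
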